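(* Let $0<\lambda<\sqrt2$. Define coefficients $a_0=a_1=-\dfrac{1}{1-\lambda^2/2}$ and $a_{n+1}=\dfrac{n}{(n+1)(1+\lambda^2 n/2)}\,a_n$ for $n\ge1$, and set $$Y(x)=a_0\ln x+\sum_{n=1}^\infty a_nx^n,\qquad x>0$$ (the series converges for all $x$). Then $Y$ satisfies $\tfrac12\lambda^2x^2Y''+x(1-x)Y'=-1$ on $(0,\infty)$. For $0<\epsilon<1$ let $u(x;\epsilon)$ be the solution of $$\tfrac12\lambda^2x^2u''(x)+x(1-x)u'(x)=-1\ \ (\epsilon<x<1),\qquad u(\epsilon)=0,\ u(1)=0.$$ Then for every $x\in(0,1)$, $$\lim_{\epsilon\to0}u(x;\epsilon)=Y(x)-Y(1),$$ and $u(x):=Y(x)-Y(1)$ solves $\tfrac12\lambda^2x^2u''+x(1-x)u'=-1$ on $(0,1)$ with $u(1)=0$; moreover $u(x)\to\infty$ as $x\to0^+$.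
   Context: $u(x;\epsilon)$ is the mean exit time from $(\epsilon,1)$ of the solution of $dX=X(1-X)\,dt+\lambda X\,dB$ (Itô) started at $x$; the limit $u(x)$ is interpreted as the expected time to reach the (rescaled) carrying capacity $x=1$. *)

(* Defs.v *)
From Stdlib Require Import Reals Lra.
From Coquelicot Require Import Coquelicot.
Open Scope R_scope.

Fixpoint acoef (lam : R) (n : nat) : R :=
  match n with
  | O => - (1 / (1 - lam ^ 2 / 2))
  | S m =>
      match m with
      | O => - (1 / (1 - lam ^ 2 / 2))
      | S _ => INR m / (INR n * (1 + lam ^ 2 * INR m / 2)) * acoef lam m
      end
  end.

Definition Yfun (lam x : R) : R :=
  acoef lam 0 * ln x + Series (fun n => acoef lam (S n) * x ^ (S n)).

Definition Lop (lam : R) (f : R -> R) (x : R) : R :=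
  / 2 * lam ^ 2 * x ^ 2 * Derive (Derive f) x + x * (1 - x) * Derive f x.

Definition solves_at (lam : R) (f : R -> R) (x : R) : Prop :=
  ex_derive f x /\ ex_derive (Derive f) x /\ Lop lam f x = -1.

Definition bvp_solution (lam eps : R) (v : R -> R) : Prop :=
  (forall x, eps < x < 1 -> solves_at lam v x) /\
  filterlim v (at_right eps) (locally (v eps)) /\
  filterlim v (at_left 1) (locally (v 1)) /\
  v eps = 0 /\ v 1 = 0.

(* Main.v *)
Require Import Defs.
From Stdlib Require Import Reals.
From Coquelicot Require Import Coquelicot.
From Stdlib Require Import Lra Lia FunctionalExtensionality.
Open Scope R_scope.

Lemma acoef_SS lam k : acoef lam (S (S k)) =
  INR (S k) / (INR (S (S k)) * (1 + lam ^ 2 * INR (S k) / 2)) * acoef lam (S k).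
Proof. reflexivity. Qed.

Lemma lam2_lt (lam : R) : 0 < lam < sqrt 2 -> 0 < lam ^ 2 < 2.
Proof.
  intros [h1 h2]. split. apply pow_lt; lra.
  rewrite <- (sqrt_sqrt 2) by lra. simpl. rewrite Rmult_1_r.
  apply Rmult_le_0_lt_compat; lra.
Qed.

Lemma acoef_neg lam : 0 < lam ^ 2 < 2 -> forall n, acoef lam (S n) < 0.
Proof.
  intros hl. induction n.
  - change (acoef lam 1) with (- (1 / (1 - lam ^ 2 / 2))). assert (0 < 1 - lam^2/2) by lra.
    assert (0 < 1 / (1 - lam^2/2)) by (apply Rdiv_lt_0_compat; lra). lra.
  - rewrite acoef_SS. 
    assert (h1 : 0 < INR (S n)) by (apply lt_0_INR; lia).
    assert (h2 : 0 < INR (S (S n))) by (apply lt_0_INR; lia).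
    assert (h3 : 0 < 1 + lam^2 * INR (S n) / 2).
    { assert (0 < lam^2 * INR (S n)) by (apply Rmult_lt_0_compat; lra). lra. }
    assert (0 < INR (S n) / (INR (S (S n)) * (1 + lam ^ 2 * INR (S n) / 2))).
    { apply Rdiv_lt_0_compat; auto. apply Rmult_lt_0_compat; auto. }
    nra.
Qed.

Lemma div_le (a b c d : R) : 0 < b -> 0 < d -> a * d <= c * b -> a / b <= c / d.
Proof.
  intros hb hd h.
  replace (a / b) with (a * d * / (b * d)) by (field; lra).
  replace (c / d) with (c * b * / (b * d)) by (field; lra).
  apply Rmult_le_compat_r; auto. left; apply Rinv_0_lt_compat; nra.
Qed.

Definition dco lam n := acoef lam (S n).
Definition cco lam := PS_incr_1 (dco lam).

Lemma rad_inf lam : 0 < lam ^ 2 < 2 -> CV_radius (cco lam) = p_infty.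
Proof.
  intros hl. unfold cco. rewrite CV_radius_incr_1.
  apply CV_radius_infinite_DAlembert.
  - intros n. unfold dco. pose proof (acoef_neg lam hl n). lra.
  - apply is_lim_seq_le_le with (u := fun _ => 0) (w := fun n => 2 / lam ^ 2 * / INR (S n)).
    + intros n. unfold dco. rewrite acoef_SS.
      pose proof (acoef_neg lam hl n).
      assert (h1 : 0 < INR (S n)) by (apply lt_0_INR; lia).
      assert (h2 : INR (S (S n)) = INR (S n) + 1) by (rewrite S_INR; ring).
      assert (h3 : 0 < 1 + lam^2 * INR (S n) / 2).
      { assert (0 < lam^2 * INR (S n)) by (apply Rmult_lt_0_compat; lra). lra. }
      rewrite h2.
      replace (INR (S n) / ((INR (S n) + 1) * (1 + lam ^ 2 * INR (S n) / 2)) * acoef lam (S n) / acoef lam (S n))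
        with (INR (S n) / ((INR (S n) + 1) * (1 + lam ^ 2 * INR (S n) / 2))) by (field; lra).
      rewrite Rabs_pos_eq.
      2: { left; apply Rdiv_lt_0_compat; auto; apply Rmult_lt_0_compat; lra. }
      split. left; apply Rdiv_lt_0_compat; auto; apply Rmult_lt_0_compat; lra.
      replace (2 / lam ^ 2 * / INR (S n)) with (2 / (lam^2 * INR (S n))) by (field; split; [lra| intro; subst; simpl in hl; lra]).
      set (s := INR (S n)) in *. assert (0 < lam^2 * s) by (apply Rmult_lt_0_compat; lra).
      apply div_le. apply Rmult_lt_0_compat; lra. lra.
      assert (E : 2 * ((s + 1) * (1 + lam ^ 2 * s / 2)) - s * (lam ^ 2 * s) = lam^2 * s + 2 * s + 2) by field.
      lra.
    + apply is_lim_seq_const.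
    + replace (Finite 0) with (Rbar_mult (2 / lam^2) 0) by (simpl; f_equal; ring).
      apply is_lim_seq_scal_l.
      replace (Finite 0) with (Rbar_inv p_infty) by reflexivity.
      apply is_lim_seq_inv. 2: discriminate.
      apply -> (is_lim_seq_incr_1 INR). apply is_lim_seq_INR.
Qed.

Lemma ex_pseries_R a x : ex_pseries a x -> ex_series (fun k => a k * x ^ k).
Proof.
  intros H. eapply ex_series_ext; [|exact H]. intros n. simpl.
  rewrite pow_n_pow. unfold scal; simpl; unfold mult; simpl. ring.
Qed.


Ltac Rring := match goal with |- ?a = ?b => change (@eq R a b); ring end.
Lemma scal_R (a b : R) : scal a b = a * b. Proof. reflexivity. Qed.
Lemma plus_R (a b : R) : plus a b = a + b. Proof. reflexivity. Qed.
Lemma opp_R (a : R) : opp a = - a. Proof. reflexivity. Qed.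

Lemma Yfun_eq lam x : Yfun lam x = acoef lam 0 * ln x + PSeries (cco lam) x.
Proof.
  unfold Yfun, PSeries. f_equal.
  rewrite (Series_incr_1_aux (fun k => cco lam k * x ^ k)).
  - apply Series_ext. intros n. reflexivity.
  - unfold cco, PS_incr_1. simpl. unfold zero; simpl. ring.
Qed.

Lemma rad_lt lam x : 0 < lam ^ 2 < 2 -> Rbar_lt (Rabs x) (CV_radius (cco lam)).
Proof. intros hl. rewrite rad_inf; auto. exact I. Qed.

Lemma rad_lt1 lam x : 0 < lam ^ 2 < 2 -> Rbar_lt (Rabs x) (CV_radius (PS_derive (cco lam))).
Proof. intros hl. rewrite CV_radius_derive. now apply rad_lt. Qed.

Lemma rad_lt2 lam x : 0 < lam ^ 2 < 2 -> Rbar_lt (Rabs x) (CV_radius (PS_derive (PS_derive (cco lam)))).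
Proof. intros hl. rewrite !CV_radius_derive. now apply rad_lt. Qed.

Lemma e_rec lam k : 0 < lam ^ 2 < 2 ->
  (1 + lam ^ 2 / 2 * INR (S k)) * PS_derive (cco lam) (S k) = PS_derive (cco lam) k.
Proof.
  intros hl. unfold PS_derive. change (cco lam (S (S k))) with (acoef lam (S (S k))).
  change (cco lam (S k)) with (acoef lam (S k)).
  rewrite acoef_SS.
  assert (h1 : 0 < INR (S k)) by (apply lt_0_INR; lia).
  assert (h2 : 0 < INR (S (S k))) by (apply lt_0_INR; lia).
  assert (h3 : 0 < 1 + lam^2 * INR (S k) / 2).
  { assert (0 < lam^2 * INR (S k)) by (apply Rmult_lt_0_compat; lra). lra. }
  field. lra.
Qed.

Lemma e_0 lam : PS_derive (cco lam) 0 = acoef lam 0.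
Proof. unfold PS_derive. change (cco lam 1) with (acoef lam 1). simpl INR. rewrite Rmult_1_l. reflexivity. Qed.

Lemma ser_id lam x : 0 < lam ^ 2 < 2 ->
  lam ^ 2 / 2 * x * PSeries (PS_derive (PS_derive (cco lam))) x
  + (1 - x) * PSeries (PS_derive (cco lam)) x = acoef lam 0.
Proof.
  intros hl.
  set (e := PS_derive (cco lam)).
  set (S1 := PSeries e x). set (S2 := PSeries (PS_derive e) x).
  assert (H1 : is_series (fun k => e k * x ^ k) S1).
  { apply Series_correct. apply ex_pseries_R. apply CV_radius_inside. now apply rad_lt1. }
  assert (H2 : is_series (fun k => PS_derive e k * x ^ k) S2).
  { apply Series_correct. apply ex_pseries_R. apply CV_radius_inside. now apply rad_lt2. }
  assert (H3 : is_series (fun k => INR k * e k * x ^ k) (x * S2)).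
  { apply is_series_decr_1.
    match goal with |- is_series _ ?L => replace L with (x * S2) end.
    2: { rewrite plus_R, opp_R. simpl INR. ring. }
    refine (is_series_ext _ _ _ _ (is_series_scal_l x _ S2 H2)).
    intros n. rewrite scal_R. unfold PS_derive. rewrite <- tech_pow_Rmult. Rring. }
  set (f := fun k => (1 + lam ^ 2 / 2 * INR k) * e k * x ^ k).
  assert (H4 : is_series f (S1 + lam ^ 2 / 2 * (x * S2))).
  { refine (is_series_ext _ _ _ _ (is_series_plus _ _ _ _ H1 (is_series_scal_l (lam ^ 2 / 2) _ _ H3))).
    intros n. change (e n * x^n + lam^2/2 * (INR n * e n * x^n) = f n). unfold f. ring. }
  assert (H5 : is_series f (x * S1 + acoef lam 0)).
  { apply is_series_decr_1.
    match goal with |- is_series _ ?L => replace L with (x * S1) end.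
    2: { unfold f. rewrite plus_R, opp_R. simpl INR. rewrite <- (e_0 lam). fold e. ring. }
    refine (is_series_ext _ _ _ _ (is_series_scal_l x _ S1 H1)).
    intros n. change (x * (e n * x^n) = f (S n)). unfold f, e.
    rewrite <- (e_rec lam n hl). change (x ^ S n) with (x * x ^ n). ring. }
  apply is_series_unique in H4. apply is_series_unique in H5.
  rewrite H4 in H5. lra.
Qed.

Lemma isd_plus f g x df dg : is_derive f x df -> is_derive g x dg -> is_derive (fun t => f t + g t) x (df + dg).
Proof. intros; now apply (is_derive_plus f g). Qed.
Lemma isd_minus f g x df dg : is_derive f x df -> is_derive g x dg -> is_derive (fun t => f t - g t) x (df - dg).
Proof. intros; now apply (is_derive_minus f g). Qed.
Lemma isd_mult f g x df dg : is_derive f x df -> is_derive g x dg -> is_derive (fun t => f t * g t) x (df * g x + f x * dg).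
Proof. intros; apply (is_derive_mult f g); auto. intros; apply Rmult_comm. Qed.

Lemma pos_loc x : 0 < x -> locally x (fun y => 0 < y).
Proof.
  intros hx. exists (mkposreal x hx). intros y Hy. simpl in Hy.
  unfold ball in Hy; simpl in Hy; unfold AbsRing_ball, abs, minus, plus, opp in Hy; simpl in Hy.
  apply Rabs_def2 in Hy. lra.
Qed.

Definition Y1 lam y := acoef lam 0 * / y + PSeries (PS_derive (cco lam)) y.
Definition Y2 lam y := - acoef lam 0 / y ^ 2 + PSeries (PS_derive (PS_derive (cco lam))) y.

Lemma inv_der y : 0 < y -> is_derive (fun t => / t) y (- / y ^ 2).
Proof. intros hy. auto_derive. lra. field. lra. Qed.

Lemma Yfun_der lam y : 0 < lam ^ 2 < 2 -> 0 < y -> is_derive (Yfun lam) y (Y1 lam y).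
Proof.
  intros hl hy.
  apply is_derive_ext with (f := fun t => acoef lam 0 * ln t + PSeries (cco lam) t).
  { intros t; now rewrite Yfun_eq. }
  unfold Y1. apply isd_plus.
  - apply is_derive_scal. now apply is_derive_ln.
  - apply is_derive_PSeries. now apply rad_lt.
Qed.

Lemma Y1_der lam y : 0 < lam ^ 2 < 2 -> 0 < y -> is_derive (Y1 lam) y (Y2 lam y).
Proof.
  intros hl hy. unfold Y1, Y2. apply isd_plus.
  - replace (- acoef lam 0 / y ^ 2) with (acoef lam 0 * (- / y ^ 2)) by (field; lra).
    apply is_derive_scal. now apply inv_der.
  - apply is_derive_PSeries. now apply rad_lt1.
Qed.

Lemma a0_eq lam : 0 < lam ^ 2 < 2 -> acoef lam 0 * (1 - lam ^ 2 / 2) = -1.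
Proof. intros hl. change (acoef lam 0) with (- (1 / (1 - lam ^ 2 / 2))). field. lra. Qed.

Lemma Yode lam y : 0 < lam ^ 2 < 2 -> 0 < y ->
  / 2 * lam ^ 2 * y ^ 2 * Y2 lam y + y * (1 - y) * Y1 lam y = -1.
Proof.
  intros hl hy. unfold Y1, Y2.
  pose proof (ser_id lam y hl) as H. pose proof (a0_eq lam hl) as H0.
  set (E := PSeries (PS_derive (cco lam)) y) in *.
  set (E' := PSeries (PS_derive (PS_derive (cco lam))) y) in *.
  set (a := acoef lam 0) in *.
  transitivity (a * (1 - lam ^ 2 / 2) - a * y + y * (lam ^ 2 / 2 * y * E' + (1 - y) * E)).
  - field. lra.
  - rewrite H, H0. ring.
Qed.

Lemma DY lam y : 0 < lam ^ 2 < 2 -> 0 < y -> Derive (Yfun lam) y = Y1 lam y.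
Proof. intros; apply is_derive_unique; now apply Yfun_der. Qed.

Lemma DDY lam y : 0 < lam ^ 2 < 2 -> 0 < y -> is_derive (Derive (Yfun lam)) y (Y2 lam y).
Proof.
  intros hl hy. apply is_derive_ext_loc with (f := Y1 lam).
  - generalize (pos_loc y hy). apply filter_imp. intros t ht. now rewrite DY.
  - now apply Y1_der.
Qed.

Lemma Y_solves lam x : 0 < lam ^ 2 < 2 -> 0 < x -> solves_at lam (Yfun lam) x.
Proof.
  intros hl hx. split; [|split].
  - eexists; now apply Yfun_der.
  - eexists; now apply DDY.
  - unfold Lop. rewrite DY by auto. rewrite (is_derive_unique _ _ _ (DDY lam x hl hx)).
    now apply Yode.
Qed.

Lemma Derive_shift (f : R -> R) c : Derive (fun y => f y - c) = Derive f.
Proof.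
  apply functional_extensionality. intros x. unfold Derive. f_equal.
  apply Lim_ext. intros h. f_equal. ring.
Qed.

Lemma solves_shift lam f c x : solves_at lam f x -> solves_at lam (fun y => f y - c) x.
Proof.
  intros [h1 [h2 h3]]. unfold solves_at, Lop in *. rewrite Derive_shift.
  split; [|split; auto].
  destruct h1 as [l hl]. exists (l - 0). apply isd_minus; auto. auto_derive; auto.
Qed.

Lemma ball_R (x e y : R) : ball x e y <-> Rabs (y - x) < e.
Proof. reflexivity. Qed.

Lemma lim_le (F : (R -> Prop) -> Prop) {FF : ProperFilter F} (f : R -> R) l B :
  filterlim f F (locally l) -> F (fun y => f y <= B) -> l <= B.
Proof.
  intros hf hB. destruct (Rle_or_lt l B) as [h|h]; auto. exfalso.
  assert (he : 0 < l - B) by lra.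
  pose proof (proj1 (filterlim_locally f l) hf (mkposreal _ he)) as H.
  destruct (filter_ex _ (filter_and _ _ H hB)) as [y [h1 h2]].
  assert (h3 : Rabs (f y - l) < l - B) by exact h1. apply Rabs_def2 in h3. lra.
Qed.

Lemma lim_plus (F : (R -> Prop) -> Prop) {FF : Filter F} (f g : R -> R) a b :
  filterlim f F (locally a) -> filterlim g F (locally b) ->
  filterlim (fun y => f y + g y) F (locally (a + b)).
Proof. intros h1 h2. eapply filterlim_comp_2; eauto. apply (filterlim_plus a b). Qed.

Lemma lim_mult (F : (R -> Prop) -> Prop) {FF : Filter F} (f g : R -> R) a b :
  filterlim f F (locally a) -> filterlim g F (locally b) ->
  filterlim (fun y => f y * g y) F (locally (a * b)).
Proof. intros h1 h2. eapply filterlim_comp_2; eauto. apply (filterlim_mult a b). Qed.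

Lemma lim_const (F : (R -> Prop) -> Prop) {FF : Filter F} (a : R) : filterlim (fun _ => a) F (locally a).
Proof. apply filterlim_const. Qed.

Lemma lim_opp (F : (R -> Prop) -> Prop) {FF : Filter F} (f : R -> R) a :
  filterlim f F (locally a) -> filterlim (fun y => - f y) F (locally (- a)).
Proof. intros h. eapply filterlim_comp; eauto. apply (filterlim_opp a). Qed.

Lemma lim_abs (F : (R -> Prop) -> Prop) {FF : Filter F} (f : R -> R) a :
  filterlim f F (locally a) -> filterlim (fun y => Rabs (f y)) F (locally (Rabs a)).
Proof.
  intros h. apply filterlim_locally. intros eps.
  generalize (proj1 (filterlim_locally f a) h eps). apply filter_imp.
  intros y hy. apply ball_R in hy. apply ball_R.
  eapply Rle_lt_trans; [|exact hy]. apply Rabs_triang_inv2.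
Qed.

Lemma cont_right (f : R -> R) x : ex_derive f x -> filterlim f (at_right x) (locally (f x)).
Proof.
  intros h. apply ex_derive_continuous in h.
  eapply filterlim_filter_le_1; [|exact h]. apply filter_le_within.
Qed.

Lemma cont_left (f : R -> R) x : ex_derive f x -> filterlim f (at_left x) (locally (f x)).
Proof.
  intros h. apply ex_derive_continuous in h.
  eapply filterlim_filter_le_1; [|exact h]. apply filter_le_within.
Qed.

Lemma mvt (f df : R -> R) a b : a <= b ->
  (forall t, a <= t <= b -> is_derive f t (df t)) ->
  exists c, a <= c <= b /\ f b - f a = df c * (b - a).
Proof.
  intros hab hd.
  destruct (MVT_gen f a b df) as [c [hc1 hc2]].
  - intros t ht. rewrite Rmin_left, Rmax_right in ht by lra. apply hd; lra.
  - intros t ht. rewrite Rmin_left, Rmax_right in ht by lra.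
    assert (H : ex_derive f t) by (eexists; apply hd; lra).
    apply ex_derive_continuous in H. apply continuity_pt_filterlim. exact H.
  - rewrite Rmin_left, Rmax_right in hc1 by lra. eauto.
Qed.

Lemma mvt_bound (f df : R -> R) a b B : a <= b ->
  (forall t, a <= t <= b -> is_derive f t (df t)) ->
  (forall t, a <= t <= b -> Rabs (df t) <= B) -> Rabs (f b - f a) <= B * (b - a).
Proof.
  intros hab hd hB. destruct (mvt f df a b hab hd) as [c [hc he]]. rewrite he.
  rewrite Rabs_mult, (Rabs_pos_eq (b - a)) by lra.
  apply Rmult_le_compat_r. lra. apply hB; auto.
Qed.

Lemma mvt_mono (f df : R -> R) a b : a <= b ->
  (forall t, a <= t <= b -> is_derive f t (df t)) ->
  (forall t, a <= t <= b -> 0 <= df t) -> f a <= f b.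
Proof.
  intros hab hd hB. destruct (mvt f df a b hab hd) as [c [hc he]].
  assert (0 <= df c * (b - a)) by (apply Rmult_le_pos; [apply hB; auto|lra]). lra.
Qed.

Lemma lim_minus (F : (R -> Prop) -> Prop) {FF : Filter F} (f g : R -> R) a b :
  filterlim f F (locally a) -> filterlim g F (locally b) ->
  filterlim (fun y => f y - g y) F (locally (a - b)).
Proof. intros h1 h2. apply lim_plus; auto. apply lim_opp; auto. Qed.

Lemma exp_le' a b : a <= b -> exp a <= exp b.
Proof. intros [h|h]. left; now apply exp_increasing. subst; lra. Qed.
Lemma ln_le' a b : 0 < a -> a <= b -> ln a <= ln b.
Proof. intros h [h'|h']. left; now apply ln_increasing. subst; lra. Qed.

Lemma ball_R2 (x e y : R) : ball x e y -> x - e < y < x + e.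
Proof. intros h. assert (h' : Rabs (y - x) < e) by exact h. apply Rabs_def2 in h'. lra. Qed.

Definition Zf lam y := Yfun lam y - Yfun lam 1.

Lemma core lam e x v : 0 < lam ^ 2 < 2 -> 0 < e < x -> x < 1 -> bvp_solution lam e v ->
  exists C, Rabs (v x - Zf lam x) <= Rabs C * exp (2 / lam ^ 2 - 2 / lam ^ 2 * ln x) /\
   C ^ 2 * (2 / lam ^ 2 - 1) / 2 * (ln e ^ 2 - ln x ^ 2) <= C * (v x - Zf lam x + Zf lam e).
Proof.
  intros hl he hx1 [hs [hcr [hcl [he0 h10]]]].
  assert (hl0 : lam <> 0) by (intro h0; subst; simpl in hl; lra).
  set (k := 2 / lam ^ 2).
  assert (hk : 1 < k).
  { assert (k * lam ^ 2 = 2) by (unfold k; field; auto). destruct (Rle_or_lt k 1); auto. exfalso. assert (k * lam ^ 2 <= 1 * lam ^ 2) by (apply Rmult_le_compat_r; lra). lra. }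
  set (g := fun t => Derive v t - Y1 lam t).
  set (g2 := fun t => Derive (Derive v) t - Y2 lam t).
  set (rho := fun t => exp (k * ln t - k * t)).
  set (phi1 := fun t => exp (k * t - k * ln t)).
  assert (hg : forall t, e < t < 1 -> is_derive g t (g2 t)).
  { intros t ht. destruct (hs t ht) as [h1 [h2 h3]]. apply isd_minus.
    - now apply Derive_correct.
    - apply Y1_der; auto; lra. }
  assert (hode : forall t, e < t < 1 -> / 2 * lam ^ 2 * t ^ 2 * g2 t + t * (1 - t) * g t = 0).
  { intros t ht. destruct (hs t ht) as [h1 [h2 h3]]. unfold Lop in h3.
    pose proof (Yode lam t hl ltac:(lra)) as h4. unfold g, g2.
    transitivity ((/ 2 * lam ^ 2 * t ^ 2 * Derive (Derive v) t + t * (1 - t) * Derive v t)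
      - (/ 2 * lam ^ 2 * t ^ 2 * Y2 lam t + t * (1 - t) * Y1 lam t)); [ring|].
    rewrite h3, h4. ring. }
  assert (hrho : forall t, 0 < t -> is_derive rho t (rho t * (k * / t - k))).
  { intros t ht. unfold rho. auto_derive. lra. unfold Rminus; ring. }
  assert (hG : forall t, e < t < 1 -> is_derive (fun t => g t * rho t) t 0).
  { intros t ht.
    replace 0 with (g2 t * rho t + g t * (rho t * (k * / t - k))).
    { apply isd_mult; auto. apply hrho; lra. }
    transitivity (rho t * (2 / (lam ^ 2 * t ^ 2)) * (/ 2 * lam ^ 2 * t ^ 2 * g2 t + t * (1 - t) * g t)).
    - unfold k. field. split; [lra|]. auto.
    - rewrite hode by auto. ring. }
  set (C := g x * rho x).
  assert (hC : forall t, e < t < 1 -> g t = C * phi1 t).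
  { intros t ht.
    assert (hGt : g t * rho t = C).
    { unfold C. 
      assert (H0 : forall a b, e < a <= b -> b < 1 -> g a * rho a = g b * rho b).
      { intros a b hab hb1.
        pose proof (mvt_bound (fun t => g t * rho t) (fun _ => 0) a b 0 ltac:(lra)
          ltac:(intros; apply hG; lra) ltac:(intros; cbv beta; rewrite Rabs_R0; lra)) as hm.
        rewrite Rmult_0_l in hm. pose proof (Rabs_pos (g b * rho b - g a * rho a)). 
        assert (hz : Rabs (g b * rho b - g a * rho a) = 0) by lra.
        apply Rabs_eq_0 in hz. lra. }
      destruct (Rle_or_lt t x); [apply H0; lra | symmetry; apply H0; lra]. }
    rewrite <- hGt. unfold phi1, rho. rewrite Rmult_assoc, <- exp_plus.
    replace (k * ln t - k * t + (k * t - k * ln t)) with 0 by ring. rewrite exp_0. ring. }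
  set (w := fun t => v t - Zf lam t).
  assert (hw : forall t, e < t < 1 -> is_derive w t (g t)).
  { intros t ht. destruct (hs t ht) as [h1 [h2 h3]].
    replace (g t) with (Derive v t - (Y1 lam t - 0)) by (unfold g; ring).
    apply isd_minus. now apply Derive_correct.
    apply isd_minus. apply Yfun_der; auto; lra. auto_derive; auto. }
  exists C. split.
  -
    set (M := exp (k - k * ln x)).
    assert (hM : 0 < M) by apply exp_pos.
    assert (hb : forall y, x < y < 1 -> Rabs (w y - w x) <= Rabs C * M).
    { intros y hy.
      eapply Rle_trans.
      - apply (mvt_bound w g x y (Rabs C * M)). lra.
        + intros t ht; apply hw; lra.
        + intros t ht. rewrite hC by lra. rewrite Rabs_mult.
          rewrite (Rabs_pos_eq (phi1 t)) by (left; apply exp_pos).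
          apply Rmult_le_compat_l. apply Rabs_pos.
          unfold phi1, M. apply exp_le'.
          assert (ln x <= ln t) by (apply ln_le'; lra).
          assert (k * t <= k) by nra. nra.
      - pose proof (Rabs_pos C). assert (0 <= Rabs C * M) by nra. nra. }
    assert (hlim : filterlim (fun y => Rabs (w y - w x)) (at_left 1) (locally (Rabs (0 - w x)))).
    { apply (lim_abs (at_left 1)). apply (lim_minus (at_left 1)); [|apply (lim_const (at_left 1))].
      replace 0 with (v 1 - (Yfun lam 1 - Yfun lam 1)) by (rewrite h10; ring).
      apply (lim_minus (at_left 1)); auto. apply (lim_minus (at_left 1)); [|apply (lim_const (at_left 1))].
      apply cont_left. eexists; apply Yfun_der; auto; lra. }
    pose proof (lim_le _ _ _ (Rabs C * M) hlim) as hle.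
    replace (v x - Zf lam x) with (w x) by reflexivity.
    rewrite <- Rabs_Ropp. replace (- w x) with (0 - w x) by ring.
    apply hle.
    exists (mkposreal (1 - x) ltac:(lra)). intros y hy hy1. apply ball_R2 in hy. simpl in hy. apply hb. lra.
  -
    set (K := C ^ 2 * (k - 1) / 2).
    set (H := fun t => C * w t + K * ln t ^ 2).
    assert (hH : forall t, e < t < 1 -> is_derive H t (C * g t + K * (2 * ln t * / t))).
    { intros t ht. unfold H. apply isd_plus; apply is_derive_scal.
      - now apply hw.
      - auto_derive. lra. ring. }
    assert (hpos : forall t, e < t < 1 -> 0 <= C * g t + K * (2 * ln t * / t)).
    { intros t ht. rewrite hC by auto.
      assert (hph : - ((k - 1) * ln t) * / t <= phi1 t).
      { unfold phi1.
        assert (hlt : ln t < 0) by (rewrite <- ln_1; apply ln_increasing; lra).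
        assert (exp (- k * ln t) <= exp (k * t - k * ln t)) by (apply exp_le'; nra).
        replace (- k * ln t) with (- ln t + - ((k - 1) * ln t)) in H0 by ring.
        rewrite exp_plus, exp_Ropp, exp_ln in H0 by lra.
        pose proof (exp_ineq1_le (- ((k - 1) * ln t))).
        assert (0 < / t) by (apply Rinv_0_lt_compat; lra).
        assert (- ((k - 1) * ln t) * / t <= / t * exp (- ((k - 1) * ln t))) by nra.
        lra. }
      unfold K.
      replace (C * (C * phi1 t) + C ^ 2 * (k - 1) / 2 * (2 * ln t * / t))
        with (C ^ 2 * (phi1 t - - ((k - 1) * ln t) * / t)) by (field; lra).
      apply Rmult_le_pos. apply pow2_ge_0. lra. }
    assert (hmono : forall y, e < y < x -> H y <= H x).
    { intros y hy. apply (mvt_mono H (fun t => C * g t + K * (2 * ln t * / t)) y x). lra.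
      - intros t ht; apply hH; lra.
      - intros t ht; apply hpos; lra. }
    assert (hlim : filterlim H (at_right e) (locally (C * (0 - Zf lam e) + K * ln e ^ 2))).
    { apply (lim_plus (at_right e)).
      - apply (lim_mult (at_right e)). apply (lim_const (at_right e)). apply (lim_minus (at_right e)). rewrite <- he0. auto.
        unfold Zf. apply (lim_minus (at_right e)); [|apply (lim_const (at_right e))].
        apply cont_right. eexists; apply Yfun_der; auto; lra.
      - apply (lim_mult (at_right e)). apply (lim_const (at_right e)). simpl. apply (lim_mult (at_right e)).
        apply cont_right. eexists; apply is_derive_ln; lra.
        apply (lim_mult (at_right e)). apply cont_right. eexists; apply is_derive_ln; lra. apply (lim_const (at_right e)). }
    pose proof (lim_le _ _ _ (H x) hlim) as hle.
    assert (hfin : C * (0 - Zf lam e) + K * ln e ^ 2 <= H x).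
    { apply hle. exists (mkposreal (x - e) ltac:(lra)). intros y hy hy1. apply ball_R2 in hy. simpl in hy. apply hmono. lra. }
    unfold H, K, w in hfin. fold k. unfold K. lra.
Qed.

Lemma Pbound lam : 0 < lam ^ 2 < 2 -> exists d, 0 < d /\
  forall y, 0 < y < d -> Rabs (PSeries (cco lam) y) <= Rabs (PSeries (cco lam) 0) + 1.
Proof.
  intros hl.
  assert (hc := ex_derive_PSeries (cco lam) 0 (rad_lt lam 0 hl)).
  apply ex_derive_continuous in hc.
  destruct (proj1 (filterlim_locally _ _) hc (mkposreal 1 Rlt_0_1)) as [d hd].
  exists d. split. apply cond_pos. intros y hy.
  assert (hb : ball 0 d y).
  { assert (Rabs (y - 0) < d) by (rewrite Rminus_0_r, Rabs_pos_eq; lra). exact H. }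
  specialize (hd y hb). apply ball_R2 in hd. simpl in hd.
  set (p0 := PSeries (cco lam) 0) in *. pose proof (Rle_abs p0).
  pose proof (Rabs_Ropp p0). pose proof (Rle_abs (- p0)). apply Rabs_le. lra.
Qed.

Lemma a0_neg lam : 0 < lam ^ 2 < 2 -> acoef lam 0 < 0.
Proof. intros hl. pose proof (acoef_neg lam hl 0). exact H. Qed.

Theorem mainTheorem6 (lam : R) (hlam : 0 < lam < sqrt 2)
  (u : R -> R -> R)
  (hu : forall eps, 0 < eps < 1 -> bvp_solution lam eps (u eps)) :
  (forall x, ex_series (fun n => acoef lam (S n) * x ^ (S n))) /\
  (forall x, 0 < x -> solves_at lam (Yfun lam) x) /\
  (forall x, 0 < x < 1 ->
     filterlim (fun eps => u eps x) (at_right 0)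
               (locally (Yfun lam x - Yfun lam 1))) /\
  (forall x, 0 < x < 1 -> solves_at lam (fun y => Yfun lam y - Yfun lam 1) x) /\
  (Yfun lam 1 - Yfun lam 1 = 0) /\
  filterlim (fun x => Yfun lam x - Yfun lam 1) (at_right 0) (Rbar_locally p_infty).
Proof.
  pose proof (lam2_lt lam hlam) as hl.
  assert (ha0 := a0_neg lam hl).
  destruct (Pbound lam hl) as [d1 [hd1 hP]].
  set (B0 := Rabs (PSeries (cco lam) 0) + 1) in *.
  assert (hB0 : 0 <= B0) by (unfold B0; pose proof (Rabs_pos (PSeries (cco lam) 0)); lra).
  split; [|split; [|split; [|split; [|split]]]].
  - intros x.
    assert (h : ex_series (fun k => cco lam k * x ^ k)).
    { apply ex_pseries_R. apply CV_radius_inside. now apply rad_lt. }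
    apply ex_series_incr_1 in h. exact h.
  - intros x hx. now apply Y_solves.
  - intros x [hx0 hx1]. apply filterlim_locally. intros eta.
    set (a0 := acoef lam 0) in *.
    set (k := 2 / lam ^ 2).
    assert (hl0 : lam <> 0) by (intro h0; subst; simpl in hl; lra).
    assert (hk : 1 < k).
    { assert (k * lam ^ 2 = 2) by (unfold k; field; auto). destruct (Rle_or_lt k 1); auto. exfalso.
      assert (k * lam ^ 2 <= 1 * lam ^ 2) by (apply Rmult_le_compat_r; lra). lra. }
    set (M := exp (k - k * ln x)).
    assert (hM : 0 < M) by apply exp_pos.
    set (B := B0 + Rabs (Yfun lam 1)).
    assert (hB : 0 <= B) by (unfold B; pose proof (Rabs_pos (Yfun lam 1)); lra).
    set (lx := ln x).
    set (al := eta * (k - 1) / 2).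
    assert (hal : 0 < al) by (unfold al; pose proof (cond_pos eta); nra).
    set (be := eta * (k - 1) * lx ^ 2 / 2 + eta * M + M * B).
    assert (hbe : 0 <= be).
    { unfold be. pose proof (cond_pos eta). pose proof (pow2_ge_0 lx).
      assert (0 <= eta * (k - 1) * lx ^ 2) by (apply Rmult_le_pos; nra). nra. }
    set (ga := M * (- a0)).
    assert (hga : 0 <= ga) by (unfold ga; nra).
    set (T := (be + ga) / al + 1).
    assert (hT : 1 <= T) by (unfold T; assert (0 <= (be + ga) / al) by (apply Rdiv_le_0_compat; lra); lra).
    assert (hdpos : 0 < Rmin x (Rmin d1 (exp (- T)))).
    { apply Rmin_pos; auto. apply Rmin_pos; auto. apply exp_pos. }
    exists (mkposreal _ hdpos). intros e he hepos.
    apply ball_R2 in he. simpl in he. rewrite Rminus_0_l, Rplus_0_l in he.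
    destruct he as [_ he].
    assert (he1 : e < x) by (eapply Rlt_le_trans; [exact he| apply Rmin_l]).
    assert (he2 : e < d1) by (eapply Rlt_le_trans; [exact he| eapply Rle_trans; [apply Rmin_r|apply Rmin_l]]).
    assert (he3 : e < exp (- T)) by (eapply Rlt_le_trans; [exact he| eapply Rle_trans; [apply Rmin_r|apply Rmin_r]]).
    assert (hz : ln e < - T) by (rewrite <- (ln_exp (- T)); apply ln_increasing; lra).
    destruct (core lam e x (u e) hl ltac:(lra) hx1 (hu e ltac:(lra))) as [C [h1 h2]].
    fold k in h1, h2. fold M in h1. fold lx in h2.
    change (Rabs (u e x - Zf lam x) < eta).
    set (W := u e x - Zf lam x) in *.
    set (D := Zf lam e) in *.
    set (z := - ln e).
    assert (hz1 : T < z) by (unfold z; lra).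
    assert (hD : Rabs D <= (- a0) * z + B).
    { unfold D, Zf. rewrite Yfun_eq. fold a0.
      specialize (hP e ltac:(lra)). fold B0 in hP.
      eapply Rle_trans. apply Rabs_triang.
      eapply Rle_trans. apply Rplus_le_compat_r. apply Rabs_triang.
      rewrite Rabs_Ropp. rewrite Rabs_pos_eq by (unfold z in *; nra).
      unfold B, z. lra. }
    assert (hlnz : ln e ^ 2 = z ^ 2) by (unfold z; ring).
    rewrite hlnz in h2.
    set (L := (k - 1) / 2 * (z ^ 2 - lx ^ 2)).
    assert (hkey : M * Rabs D < eta * (L - M)).
    { assert (h3 : al * T = be + ga + al) by (unfold T; field; lra).
      assert (h4 : al * z > be + ga + al) by (rewrite <- h3; apply Rmult_lt_compat_l; lra).
      assert (h5 : al * z * z > (be + ga + al) * z) by (apply Rmult_lt_compat_r; lra).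
      assert (h6 : be * z >= be) by nra.
      assert (h7 : M * Rabs D <= ga * z + M * B).
      { unfold ga. assert (M * Rabs D <= M * ((- a0) * z + B)) by (apply Rmult_le_compat_l; lra). nra. }
      assert (h8 : eta * (L - M) = al * z * z - (be - M * B)).
      { unfold L, al, be. field. }
      rewrite h8. nra. }
    set (c := Rabs C).
    assert (hc0 : 0 <= c) by apply Rabs_pos. change (Rabs C) with c in h1.
    assert (hC2 : C ^ 2 = c ^ 2) by (unfold c; rewrite <- (pow2_abs C); reflexivity).
    assert (h9 : C * (W + D) <= c * (Rabs W + Rabs D)).
    { eapply Rle_trans. apply Rle_abs. rewrite Rabs_mult. apply Rmult_le_compat_l; auto. apply Rabs_triang. }
    assert (h10 : c ^ 2 * L <= c * (c * M + Rabs D)).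
    { rewrite <- hC2. eapply Rle_trans; [|eapply Rle_trans; [exact h2 | eapply Rle_trans; [exact h9|]]].
      - right. unfold L. field.
      - apply Rmult_le_compat_l; auto. lra. }
    pose proof (Rabs_pos D). pose proof (cond_pos eta).
    assert (hLM : 0 < L - M) by nra.
    destruct (Req_dec c 0) as [hc|hc].
    + rewrite hc in h1. lra.
    + assert (hcp : 0 < c) by lra.
      assert (h11 : c * (L - M) <= Rabs D).
      { apply Rmult_le_reg_l with c; auto. nra. }
      assert (h12 : M * c * (L - M) < eta * (L - M)) by nra.
      assert (h13 : M * c < eta) by (apply Rmult_lt_reg_r with (L - M); auto; lra).
      lra.
  - intros x hx. apply solves_shift. apply Y_solves; auto; lra.
  - ring.
  - intros Q [Mq hQ].
    set (a0 := acoef lam 0) in *.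
    set (T' := Mq + B0 + Rabs (Yfun lam 1)).
    assert (hdpos : 0 < Rmin d1 (exp (T' / a0))) by (apply Rmin_pos; auto; apply exp_pos).
    exists (mkposreal _ hdpos). intros y hy hypos. apply hQ.
    apply ball_R2 in hy. simpl in hy. rewrite Rminus_0_l, Rplus_0_l in hy. destruct hy as [_ hy].
    assert (hy1 : y < d1) by (eapply Rlt_le_trans; [exact hy| apply Rmin_l]).
    assert (hy2 : y < exp (T' / a0)) by (eapply Rlt_le_trans; [exact hy| apply Rmin_r]).
    assert (hln : ln y < T' / a0) by (rewrite <- (ln_exp (T' / a0)); apply ln_increasing; lra).
    assert (h1 : a0 * ln y > T').
    { replace T' with (a0 * (T' / a0)) by (field; lra). apply Rmult_lt_gt_compat_neg_l; lra. }
    rewrite Yfun_eq. fold a0.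
    specialize (hP y ltac:(lra)). fold B0 in hP.
    pose proof (Rle_abs (- PSeries (cco lam) y)). rewrite Rabs_Ropp in H.
    pose proof (Rle_abs (Yfun lam 1)).
    unfold T' in h1. lra.
Qed.
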